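(* Let $B_1$ and $B_2$ be rook equivalent Ferrers boards, both written with $n$ columns, such that $\{B_1,B_2\}$ is an edge of the rook equivalence graph. Then the root vectors $\xi(B_1)$ and $\xi(B_2)$ differ only in two positions, whose entries are swapped. That is, if $\xi(B_1)=\langle z_1,\ldots,z_{i_1},\ldots,z_{i_2},\ldots,z_n\rangle$ then $\xi(B_2)=\langle z_1,\ldots,z_{i_2},\ldots,z_{i_1},\ldots,z_n\rangle$ for some $1\le i_1<i_2\le n$ with $z_{i_1}\neq z_{i_2}$.
   Context: A Ferrers board is given by a weakly increasing sequence of non-negative integers $B=(b_1,\ldots,b_n)$ of column heights; it is the set of unit cells in the first quadrant lying in column $i$ and rows $1,\ldots,b_i$. Prepending columns of height $0$ on the left does not change the board, and boards are compared using the same number of columns by such padding. A placement of $k$ rooks on $B$ is a set of $k$ cells of $B$ no two in the same row or column; $r_k(B)$ is the number of such placements. Two boards are rook equivalent ($B_1\equiv B_2$) if $r_k(B_1)=r_k(B_2)$ for all $k\ge 0$. The root vector of $B=(b_1,\ldots,b_n)$ is $\xi(B)=\langle 0-b_1,1-b_2,\ldots,(n-1)-b_n\rangle$. The rook equivalence graph of the class of $B$ has as vertices all Ferrers boards rook equivalent to $B$, and $\{B_1,B_2\}$ is an edge iff, written with the same number of columns, $B_1$ and $B_2$ differ in exactly two columns $i$ and $j$, where $B_1$ has $k$ more cells than $B_2$ in column $i$ and $k$ fewer cells than $B_2$ in column $j$, for some $k>0$ (i.e. one is obtained from the other by moving $k$ cells from the top of one column to the top of another). *)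

(* Defs.v *)
From mathcomp Require Import all_boot all_order all_algebra.
Set Implicit Arguments. Unset Strict Implicit. Unset Printing Implicit Defensive.
Import GRing.Theory Num.Theory.

(* A Ferrers board with n columns is a weakly increasing sequence of column
   heights B = [:: b_1; ...; b_n] (column i, 0-based here, has rows 0..b_i - 1). *)
Definition ferrers (B : seq nat) : bool := sorted leq B.

Definition maxh (B : seq nat) : nat := \max_(b <- B) b.

(* Cells of B: (column i, row j) with j < b_i (row j stands for row j+1). *)
Definition cells (B : seq nat) : {set 'I_(size B) * 'I_(maxh B)} :=
  [set c : 'I_(size B) * 'I_(maxh B) | (nat_of_ord c.2 < nth 0 B c.1)%N].

Definition rook_placement (B : seq nat) (S : {set 'I_(size B) * 'I_(maxh B)}) : bool :=
  (S \subset cells B) &&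
  [forall c in S, forall d in S, ((c.1 == d.1) || (c.2 == d.2)) ==> (c == d)].

Definition rook_number (B : seq nat) (k : nat) : nat :=
  #|[set S | @rook_placement B S & #|S| == k]|.

Definition rook_equiv (B1 B2 : seq nat) : Prop :=
  forall k, rook_number B1 k = rook_number B2 k.

Definition rook_edge (n : nat) (B1 B2 : seq nat) : Prop :=
  exists i j k : nat, [/\ (i < n)%N, (j < n)%N, i <> j & (0 < k)%N] /\
    [/\ nth 0 B1 i = nth 0 B2 i + k, nth 0 B1 j + k = nth 0 B2 j &
    forall l, (l < n)%N -> l <> i -> l <> j -> nth 0 B1 l = nth 0 B2 l].

Definition root_vector (B : seq nat) : seq int :=
  [seq (i%:Z - (nth 0 B i)%:Z)%R | i <- iota 0 (size B)].

(* Main.v *)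
Require Import Defs.
From mathcomp Require Import all_boot all_order all_algebra zify ring lra.

Lemma count_lt (m b : nat) : \sum_(s < m) ((s < b) : nat) = minn b m.
Proof.
elim: m => [|m IH]; first by rewrite big_ord0 minn0.
rewrite big_ord_recr /= IH; case: (ltnP m b) => h /=; lia.
Qed.

Lemma count_lt_ne (m b r : nat) :
  \sum_(s < m) (((s < b) && (nat_of_ord s != r)) : nat) = minn b m - (r < minn b m).
Proof.
elim: m => [|m IH]; first by rewrite big_ord0 minn0.
rewrite big_ord_recr /= IH; case: (ltnP m b) => h /=; case: (m =P r) => e /=;
case: (ltnP r (minn b m)) => h2; case: (ltnP r (minn b m.+1)) => h3 /=; lia.
Qed.

Lemma maxh_ge (B : seq nat) p : nth 0 B p <= maxh B.
Proof.
case: (ltnP p (size B)) => h; last by rewrite nth_default.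
by rewrite /maxh; apply: leq_bigmax_seq => //; exact: mem_nth.
Qed.

Lemma sorted_mono (B : seq nat) p q : sorted leq B -> p <= q -> q < size B ->
  nth 0 B p <= nth 0 B q.
Proof.
move=> sB pq qn; apply: (sorted_leq_nth leq_trans leqnn) => //.
by rewrite inE (leq_ltn_trans pq qn).
Qed.

Lemma step1 (B : seq nat) :
  rook_number B 2 =
  #|[set x : ('I_(size B) * 'I_(maxh B)) * ('I_(size B) * 'I_(maxh B)) |
      [&& x.1 \in cells B, x.2 \in cells B, (x.1.1 < x.2.1)%N & x.1.2 != x.2.2]]|.
Proof.
rewrite /rook_number.
set P := [set x : _ * _ | _].
have inj : {in P &, injective (fun x => [set x.1; x.2])}.
  move=> [c d] [c' d']; rewrite !inE /= => /and4P[_ _ cd _] /and4P[_ _ cd' _] E.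
  have cin : c \in [set c'; d'] by rewrite -E set21.
  have din : d \in [set c'; d'] by rewrite -E set22.
  have cin' : c' \in [set c; d] by rewrite E set21.
  move: cin din cin'; rewrite !inE.
  case/orP=> /eqP ec; case/orP=> /eqP ed; case/orP=> /eqP ec'; subst => //;
  try by rewrite ltnn in cd *; try by rewrite ltnn in cd'.
  all: try (by move: (ltn_trans cd cd'); rewrite ltnn).
  all: try (by rewrite ltnn in cd').
  all: try (by rewrite ltnn in cd).
rewrite -(card_in_imset inj); apply: eq_card => S; rewrite !inE.
apply/idP/idP.
- case/andP => /andP[sub /forallP fa] /cards2P[x [y [xy ES]]].
  have xc : x \in cells B by apply: (subsetP sub); rewrite ES set21.
  have yc : y \in cells B by apply: (subsetP sub); rewrite ES set22.
  have := fa x; rewrite ES set21 => /forallP/(_ y); rewrite set22 /=.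
  rewrite (negbTE xy) implybF negb_or => /andP[n1 n2].
  apply/imsetP; case: (ltngtP x.1 y.1) => h.
  + by exists (x, y) => //; rewrite inE /= xc yc h n2.
  + exists (y, x) => //=; last by rewrite setUC.
    by rewrite inE /= xc yc h eq_sym n2.
  + by move: n1; rewrite -(inj_eq val_inj) /= h eqxx.
- case/imsetP => -[c d]; rewrite inE /= => /and4P[cc dc cd rd] ->.
  have ncd : c != d by apply/eqP => e; rewrite e ltnn in cd.
  rewrite cards2 ncd andbT; apply/andP; split.
    apply/subsetP => z; rewrite in_set2; case/orP => /eqP ->; [exact: cc | exact: dc].
  apply/forallP => u; apply/implyP; rewrite !inE => hu.
  apply/forallP => v; apply/implyP; rewrite !inE => hv.
  apply/implyP.
  case/orP: hu => /eqP->; case/orP: hv => /eqP-> //=.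
  + rewrite (negbTE rd) orbF => /eqP e; by rewrite e ltnn in cd.
  + rewrite [d.2 == _]eq_sym (negbTE rd) orbF => /eqP e; by rewrite e ltnn in cd.
Qed.

Lemma step2 (B : seq nat) : sorted leq B ->
  #|[set x : ('I_(size B) * 'I_(maxh B)) * ('I_(size B) * 'I_(maxh B)) |
      [&& x.1 \in cells B, x.2 \in cells B, (x.1.1 < x.2.1)%N & x.1.2 != x.2.2]]|
  = \sum_(q < size B) \sum_(p < q) nth 0 B p * (nth 0 B q - 1).
Proof.
move=> sB.
set n := size B; set m := maxh B.
set P := [set x : _ * _ | _].
rewrite -sum1_card big_mkcond /=.
pose G (p : 'I_n) (r : 'I_m) (q : 'I_n) (s : 'I_m) : nat :=
  [&& (r < nth 0 B p)%N, (s < nth 0 B q)%N, (p < q)%N & r != s].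
transitivity (\sum_p \sum_r \sum_q \sum_s G p r q s).
  transitivity (\sum_c \sum_d (if (c, d) \in P then 1 else 0)).
    by rewrite pair_bigA; apply: eq_bigr => -[c d] _.
  rewrite (pair_bigA _ (fun p r => \sum_q \sum_s G p r q s)) /=.
  apply: eq_bigr => -[p r] _; rewrite (pair_bigA _ (fun q s => G p r q s)) /=.
  apply: eq_bigr => -[q s] _; rewrite /G inE /cells !inE /=.
  by case: andP.
transitivity (\sum_(p : 'I_n) \sum_(r : 'I_m) \sum_(q : 'I_n) ((r < nth 0 B p) && (p < q) : nat) * (nth 0 B q - 1)).
  apply: eq_bigr => p _; apply: eq_bigr => r _; apply: eq_bigr => q _.
  rewrite /G; case: (ltnP r (nth 0 B p)) => h1 /=; last by rewrite big1.
  case: (ltnP p q) => h2 /=; last by rewrite big1 // => s _; rewrite andbF.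
  rewrite mul1n.
  have hq : nth 0 B p <= nth 0 B q by apply: sorted_mono => //; exact: ltnW.
  have hm := maxh_ge B q.
  transitivity (\sum_(s < m) (((s < nth 0 B q) && (r != s :> nat)) : nat)).
    by [].
  under eq_bigr do rewrite eq_sym.
  rewrite count_lt_ne.
  rewrite (minn_idPl hm).
  have -> : (r < nth 0 B q) = true by apply/idP; exact: leq_trans h1 hq.
  by [].
transitivity (\sum_(p : 'I_n) \sum_(q : 'I_n) ((p < q) : nat) * (nth 0 B p * (nth 0 B q - 1))).
  apply: eq_bigr => p _; rewrite exchange_big; apply: eq_bigr => q _.
  rewrite -big_distrl /=.
  under eq_bigr do rewrite andbC.
  case: (ltnP p q) => h /=; last by rewrite big1 // => r _; rewrite andbF.
  by rewrite count_lt mul1n (minn_idPl (maxh_ge B p)).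
rewrite exchange_big; apply: eq_bigr => q _.
rewrite (big_ord_widen n (fun p => nth 0 B p * (nth 0 B q - 1)) (ltnW (ltn_ord q))).
rewrite [RHS]big_mkcond; apply: eq_bigr => p _ /=.
case: ifP => _ /=. by rewrite mul1n. by rewrite mul0n.
Qed.
Import GRing.Theory Num.Theory.
Section DSec.
Local Open Scope ring_scope.

Lemma ident (b : nat -> int) (n : nat) :
  2 * \sum_(q < n) \sum_(p < q) b p * (b q - 1) =
  (\sum_(p < n) b p) ^+ 2 - 2 * (n%:R - 1) * (\sum_(p < n) b p)
  - \sum_(p < n) (b p - p%:R) ^+ 2 + \sum_(p < n) (p%:R : int) ^+ 2.
Proof.
elim: n => [|n IH]; first by rewrite !big_ord0; ring.
rewrite !big_ord_recr /= mulrDr IH.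
set S := \sum_(p < n) b p.
rewrite -big_distrl /= -/S -(addn1 n) natrD.
ring.
Qed.

Lemma diff2 (f g : nat -> int) (n i j : nat) : (i < n)%N -> (j < n)%N -> i <> j ->
  (forall l, (l < n)%N -> l <> i -> l <> j -> f l = g l) ->
  \sum_(l < n) f l = \sum_(l < n) g l + (f i - g i) + (f j - g j).
Proof.
move=> hi hj ij H.
have hji : Ordinal hj != Ordinal hi by apply/eqP => -[e]; apply: ij.
rewrite (bigD1 (Ordinal hi)) //= (bigD1 (Ordinal hj)) //=.
rewrite [in RHS](bigD1 (Ordinal hi)) //= [in RHS](bigD1 (Ordinal hj)) //=.
rewrite (eq_bigr (fun l : 'I_n => g l)).
  by ring.
move=> l /andP[/eqP li /eqP lj]; apply: H => // e.
  by apply: li; apply: val_inj.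
by apply: lj; apply: val_inj.
Qed.
End DSec.
Import GRing.Theory Num.Theory.

Lemma swap_concl (n : nat) (x y : seq int) (i j : nat) :
  size x = n -> size y = n -> (i < n)%N -> (j < n)%N -> i <> j ->
  nth 0%R x i != nth 0%R x j -> nth 0%R y i = nth 0%R x j -> nth 0%R y j = nth 0%R x i ->
  (forall l, (l < n)%N -> l <> i -> l <> j -> nth 0%R y l = nth 0%R x l) ->
  exists i1 i2 : nat,
    [/\ (i1 < i2)%N, (i2 < n)%N,
        nth 0%R x i1 != nth 0%R x i2 &
        y = [seq nth 0%R x (if k == i1 then i2 else if k == i2 then i1 else k)
          | k <- iota 0 n]].
Proof.
move=> sx sy hi hj ij ne yi yj yo.
have key : forall i1 i2, i1 = i /\ i2 = j \/ i1 = j /\ i2 = i ->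
  y = [seq nth 0%R x (if k == i1 then i2 else if k == i2 then i1 else k)
          | k <- iota 0 n].
  move=> i1 i2 H; apply: (@eq_from_nth _ 0%R); first by rewrite size_map size_iota.
  move=> l; rewrite sy => hl; rewrite (nth_map 0%N) ?size_iota // nth_iota // add0n.
  case: (l =P i1) => [->|l1]; first by case: H => -[-> ->].
  case: (l =P i2) => [->|l2]; first by case: H => -[-> ->].
  by apply: yo => // e; case: H => -[e1 e2]; subst.
case: (ltngtP i j) => h.
- by exists i, j; split => //; apply: key; left.
- by exists j, i; split => //; [rewrite eq_sym | apply: key; right].
- by case: ij.
Qed.

Lemma rv_nth (B : seq nat) l : (l < size B)%N ->
  nth 0%R (root_vector B) l = (l%:Z - (nth 0 B l)%:Z)%R.
Proof.
by move=> h; rewrite /root_vector (nth_map 0%N) ?size_iota // nth_iota.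
Qed.

Lemma r2_int (B : seq nat) (n : nat) : sorted leq B -> size B = n ->
  ((rook_number B 2)%:Z = \sum_(q < n) \sum_(p < q)
     (nth 0%N B p)%:Z * ((nth 0%N B q)%:Z - 1))%R.
Proof.
move=> sB sz; rewrite step1 step2 // sz -natz natr_sum.
apply: eq_bigr => q _; rewrite natr_sum; apply: eq_bigr => p _.
rewrite natz.
have : (nth 0 B p <= nth 0 B q)%N.
  by apply: sorted_mono => //; [exact: ltnW | rewrite sz].
nia.
Qed.

Theorem theorem6 (n : nat) (B1 B2 : seq nat) :
  size B1 = n -> size B2 = n -> ferrers B1 -> ferrers B2 ->
  rook_equiv B1 B2 -> rook_edge n B1 B2 ->
  exists i1 i2 : nat,
    [/\ (i1 < i2)%N, (i2 < n)%N,
        nth 0%R (root_vector B1) i1 != nth 0%R (root_vector B1) i2 &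
        root_vector B2 =
          [seq nth 0%R (root_vector B1)
                 (if k == i1 then i2 else if k == i2 then i1 else k)
          | k <- iota 0 n]].
Proof.
move=> s1 s2 f1 f2 req [i [j [k [[hi hj ij k0] [e1 e2 eo]]]]].
have R : (2 * (rook_number B1 2)%:Z = 2 * (rook_number B2 2)%:Z)%R by rewrite req.
rewrite (r2_int B1 n f1 s1) (r2_int B2 n f2 s2) in R.
have I1 := ident (fun p => Posz (nth 0%N B1 p)) n.
have I2 := ident (fun p => Posz (nth 0%N B2 p)) n.
rewrite /= in I1 I2; rewrite I1 I2 {I1 I2} in R.
set b1 := fun p => Posz (nth 0%N B1 p); set b2 := fun p => Posz (nth 0%N B2 p).
have S := diff2 b1 b2 n i j hi hj ij (fun l hl li lj => congr1 Posz (eo l hl li lj)).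
have Q := diff2 (fun p => (b1 p - p%:R) ^+ 2)%R (fun p => (b2 p - p%:R) ^+ 2)%R n i j hi hj ij
  (fun l hl li lj => congr1 (fun z => (Posz z - l%:R) ^+ 2)%R (eo l hl li lj)).
have E1 : b1 i = (b2 i + Posz k)%R by rewrite /b1 /b2 e1.
have E2 : (b1 j + Posz k)%R = b2 j by rewrite /b1 /b2 -e2.
move: S Q R; rewrite /= E1 -E2.
rewrite /b1 /b2 /=.
set T1 := (\sum_(l < n) Posz (nth 0%N B1 l))%R.
set T2 := (\sum_(l < n) Posz (nth 0%N B2 l))%R.
set U1 := (\sum_(l < n) (Posz (nth 0%N B1 l) - l%:R) ^+ 2)%R.
set U2 := (\sum_(l < n) (Posz (nth 0%N B2 l) - l%:R) ^+ 2)%R.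
set V := (\sum_(l < n) (l%:R : int) ^+ 2)%R.
set x := Posz (nth 0%N B2 i); set y := Posz (nth 0%N B1 j).
move=> S Q R.
have ST : T1 = T2 by rewrite S; ring.
rewrite ST in R.
have key : (x - i%:R = y - j%:R)%R.
  have X : (((x + Posz k - i%:R) ^+ 2 - (x - i%:R) ^+ 2) + ((y - j%:R) ^+ 2 - (y + Posz k - j%:R) ^+ 2) = 0)%R.
    clear -Q R; clearbody T2 U1 U2 V x y; lra.
  have kp : (0 < Posz k :> int)%R by rewrite ltz_nat.
  clear -X kp; clearbody x y; nia.
rewrite /b1 /b2 /= -/x -/y in E1 E2.
have sz1 : size (root_vector B1) = n by rewrite /root_vector size_map size_iota.
have sz2 : size (root_vector B2) = n by rewrite /root_vector size_map size_iota.
apply: (swap_concl n (root_vector B1) (root_vector B2) i j) => //.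
- rewrite !rv_nth ?s1 // E1 -/y; apply/eqP => h.
  have kp : (0 < Posz k)%R by rewrite ltz_nat.
  clear -h key kp; clearbody x y; lra.
- rewrite !rv_nth ?s1 ?s2 // -/x -/y; clear -key; clearbody x y; lra.
- rewrite !rv_nth ?s1 ?s2 // E1 -E2 -/y; clear -key; clearbody x y; lra.
- move=> l hl li lj; rewrite !rv_nth ?s1 ?s2 // eo //.
Qed.
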